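(* Let $\mathcal{R}$ be a right amenable cell space with finite stabiliser $G_0$, and let $(\mathcal{R},Q,N,\delta)$ be a semi-cellular automaton with $Q$ finite and nonempty and $N$ finite, whose global transition function $\Delta$ is not surjective. Then there is a Garden of Eden pattern with nonempty finite domain, i.e. a nonempty finite $F\subseteq M$ and $p\colon F\to Q$ such that $\Delta(c)|_F\neq p$ for every $c\in Q^M$.
   Context: A cell space $\mathcal{R}$ consists of a group $G$ acting transitively on the left on a nonempty set $M$ via $\triangleright$, a point $m_0\in M$ and a family $(g_{m_0,m})_{m\in M}$ in $G$ with $g_{m_0,m}\triangleright m_0=m$. $G_0$ is the stabiliser of $m_0$, $G/G_0$ the set of left cosets, with $G$ acting by $g\cdot hG_0=ghG_0$. The right semi-action $\triangleleft\colon M\times G/G_0\to M$ is $m\triangleleft gG_0=g_{m_0,m}g\triangleright m_0$. $\mathcal{R}$ is right amenable if there is a finitely additive probability measure $\mu$ on the power set of $M$ such that $\mu(\{a\triangleleft\mathfrak{g}:a\in A\})=\mu(A)$ whenever $\mathfrak{g}\in G/G_0$, $A\subseteq M$ and $m\mapsto m\triangleleft\mathfrak{g}$ is injective on $A$. A semi-cellular automaton is $(\mathcal{R},Q,N,\delta)$ with $Q$ a set, $N\subseteq G/G_0$ with $G_0\cdot N\subseteq N$, $\delta\colon Q^N\to Q$; its global transition function is $\Delta(c)(m)=\delta(n\mapsto c(m\triangleleft n))$. *)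

(* Defs.v *)
From Stdlib Require Import Reals List ClassicalEpsilon.
Set Implicit Arguments.
Open Scope R_scope.

Record cell_space := CellSpace {
  cs_G : Type;
  cs_M : Type;
  cs_mul : cs_G -> cs_G -> cs_G;
  cs_one : cs_G;
  cs_inv : cs_G -> cs_G;
  cs_act : cs_G -> cs_M -> cs_M;
  cs_m0 : cs_M;
  cs_gm : cs_M -> cs_G;
  cs_mulA : forall a b c, cs_mul a (cs_mul b c) = cs_mul (cs_mul a b) c;
  cs_mul1g : forall a, cs_mul cs_one a = a;
  cs_mulg1 : forall a, cs_mul a cs_one = a;
  cs_mulVg : forall a, cs_mul (cs_inv a) a = cs_one;
  cs_mulgV : forall a, cs_mul a (cs_inv a) = cs_one;
  cs_act1 : forall m, cs_act cs_one m = m;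
  cs_actM : forall g h m, cs_act (cs_mul g h) m = cs_act g (cs_act h m);
  cs_transitive : forall m m', exists g, cs_act g m = m';
  cs_gmP : forall m, cs_act (cs_gm m) cs_m0 = m
}.

Section CellSpaceDefs.
Variable CS : cell_space.
Local Notation G := (cs_G CS).
Local Notation M := (cs_M CS).

Definition stab (g : G) : Prop := cs_act CS g (cs_m0 CS) = cs_m0 CS.

Definition lcoset (g : G) : G -> Prop :=
  fun h => exists k, stab k /\ h = cs_mul CS g k.

Definition coset_space : Type := {A : G -> Prop | exists g, A = lcoset g}.

Definition mkcoset (g : G) : coset_space :=
  exist _ (lcoset g) (ex_intro _ g eq_refl).

Definition crepr (x : coset_space) : G :=
  proj1_sig (constructive_indefinite_description _ (proj2_sig x)).

Definition cact (g : G) (x : coset_space) : coset_space :=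
  mkcoset (cs_mul CS g (crepr x)).

(** Right semi-action  m <| gG_0 = g_{m0,m} g |> m0 (independent of the
    representative). *)
Definition rsemi (m : M) (x : coset_space) : M :=
  cs_act CS (cs_mul CS (cs_gm CS m) (crepr x)) (cs_m0 CS).

Definition finite_set {T : Type} (A : T -> Prop) : Prop :=
  exists l : list T, forall x, A x -> In x l.

Definition finite_type (T : Type) : Prop :=
  exists l : list T, forall x : T, In x l.

Definition right_amenable : Prop :=
  exists mu : (M -> Prop) -> R,
    (forall A, 0 <= mu A) /\
    mu (fun _ => True) = 1 /\
    (forall A B, (forall m, A m -> B m -> False) ->
       mu (fun m => A m \/ B m) = mu A + mu B) /\
    (forall (x : coset_space) (A : M -> Prop),
       (forall a b, A a -> A b -> rsemi a x = rsemi b x -> a = b) ->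
       mu (fun m => exists a, A a /\ m = rsemi a x) = mu A).

Definition global_transition {Q : Type} (N : coset_space -> Prop)
  (delta : ({n : coset_space | N n} -> Q) -> Q) (c : M -> Q) : M -> Q :=
  fun m => delta (fun n => c (rsemi m (proj1_sig n))).

End CellSpaceDefs.

Arguments stab {CS} g.
Arguments cact {CS} g x.
Arguments rsemi {CS} m x.
Arguments global_transition {CS Q} N delta c m.

(* Main.v *)
Require Import Defs.
From Stdlib Require Import Reals List.
From Stdlib Require Import List Classical ClassicalEpsilon FunctionalExtensionality.
From mathcomp Require classical_sets.

Section Compact.
Variables (M Q : Type) (D : (M -> Q) -> M -> Q) (d : M -> Q) (lq : list Q) (q0 : Q).
Hypothesis lqP : forall q, In q lq.
Hypothesis loc : forall m, exists K : list M, forall c c',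
  (forall x, In x K -> c x = c' x) -> D c m = D c' m.
Hypothesis fin : forall L : list M, exists c, forall m, In m L -> D c m = d m.

Definition good (A : M * Q -> Prop) : Prop :=
  (forall m q q', A (m,q) -> A (m,q') -> q = q') /\
  forall L : list M, exists c, forall m, In m L ->
     (forall q, A (m,q) -> c m = q) /\ D c m = d m.

Lemma chain_good (F : (M * Q -> Prop) -> Prop) :
  (forall X, F X -> good X) ->
  (forall X Y, F X -> F Y -> (forall t, X t -> Y t) \/ (forall t, Y t -> X t)) ->
  good (fun a => exists2 X, F X & X a).
Proof.
intros FP Ftot.
set (U := fun a => exists2 X, F X & X a).
assert (Ufun : forall m q q', U (m,q) -> U (m,q') -> q = q').
{ intros m q q' [X FX Xq] [Y FY Yq].
  destruct (Ftot X Y FX FY) as [H|H].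
  - apply (proj1 (FP Y FY) m); auto.
  - apply (proj1 (FP X FX) m); auto. }
split; [exact Ufun|].
assert (cover : forall L : list M, (forall m q, In m L -> ~ U (m,q)) \/
   exists Z, F Z /\ forall m q, In m L -> U (m,q) -> Z (m,q)).
{ induction L as [|m L IH].
  - left; intros m q [].
  - destruct (classic (exists q, U (m,q))) as [[q [Y FY Yq]]|Hn].
    + right. destruct IH as [IH|[Z [FZ HZ]]].
      * exists Y; split; auto. intros m' q' [->|Hin] Hu.
        -- assert (q' = q) by (apply (Ufun m'); auto; exists Y; auto). subst; auto.
        -- exfalso; exact (IH _ _ Hin Hu).
      * destruct (Ftot Y Z FY FZ) as [H|H].
        -- exists Z; split; [auto|]. intros m' q' [->|Hin] Hu.
           ++ assert (q' = q) by (apply (Ufun m'); auto; exists Y; auto). subst; auto.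
           ++ auto.
        -- exists Y; split; [auto|]. intros m' q' [->|Hin] Hu.
           ++ assert (q' = q) by (apply (Ufun m'); auto; exists Y; auto). subst; auto.
           ++ auto.
    + destruct IH as [IH|[Z [FZ HZ]]].
      * left. intros m' q' [->|Hin] Hu; [apply Hn; eauto| exact (IH _ _ Hin Hu)].
      * right; exists Z; split; auto. intros m' q' [->|Hin] Hu; [exfalso; apply Hn; eauto|auto]. }
intros L. destruct (cover L) as [H|[Z [FZ HZ]]].
- destruct (fin L) as [c Hc]; exists c; intros m Hm; split; auto.
  intros q Hu; exfalso; exact (H _ _ Hm Hu).
- destruct (proj2 (FP Z FZ) L) as [c Hc]; exists c; intros m Hm.
  destruct (Hc m Hm) as [H1 H2]; split; auto.
Qed.

Lemma ext_bad (A : M * Q -> Prop) m :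
  good A ->
  (forall q, ~ good (fun a => A a \/ a = (m,q))) ->
  (forall q, ~ A (m,q)) -> False.
Proof.
intros GA Hb Hn.
assert (Hfun : forall q m1 q1 q2, (A (m1,q1) \/ (m1,q1) = (m,q)) -> (A (m1,q2) \/ (m1,q2) = (m,q)) -> q1 = q2).
{ intros q m1 q1 q2 [H1|H1] [H2|H2].
  - exact (proj1 GA m1 q1 q2 H1 H2).
  - injection H2; intros; subst. exfalso; exact (Hn _ H1).
  - injection H1; intros; subst. exfalso; exact (Hn _ H2).
  - injection H1; injection H2; intros; subst; auto. }
assert (key : forall ls : list Q, exists L : list M, forall c,
  (forall x, In x L -> (forall q, A (x,q) -> c x = q) /\ D c x = d x) -> ~ In (c m) ls).
{ induction ls as [|q ls IH].
  - exists nil; intros c _ [].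
  - destruct IH as [L HL].
    assert (Hq : ~ forall L, exists c, forall x, In x L ->
       (forall q', (A (x,q') \/ (x,q') = (m,q)) -> c x = q') /\ D c x = d x).
    { intro H; apply (Hb q); split; [apply Hfun|exact H]. }
    apply not_all_ex_not in Hq. destruct Hq as [Lq Hq].
    exists (m :: Lq ++ L). intros c Hc [Heq|Hin].
    + apply Hq; exists c; intros x Hx.
      destruct (Hc x (or_intror (in_or_app _ _ _ (or_introl Hx)))) as [H1 H2].
      split; auto. intros q' [Ha|Ha]; auto. injection Ha; intros; subst; auto.
    + apply (HL c); auto. intros x Hx; apply Hc; right; apply in_or_app; auto. }
destruct (key lq) as [L HL].
destruct (proj2 GA L) as [c Hc].
exact (HL c Hc (lqP _)).
Qed.

Lemma compactness : exists c, forall m, D c m = d m.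
Proof.
destruct (classical_sets.Zorn_bigcup (T := (M*Q)%type) (P := good)) as [A [GA Amax]].
{ intros F FP Ftot. apply chain_good; auto. }
assert (tot : forall m, exists q, A (m,q)).
{ intros m. apply NNPP; intro Hn.
  apply (ext_bad A m GA).
  - intros q Hg. refine (Amax _ _ Hg). unfold classical_sets.proper, classical_sets.subset.
    split; [intros t Ht; left; exact Ht|].
    intros Hs; apply Hn; exists q; apply Hs; right; reflexivity.
  - intros q Hq; apply Hn; eauto. }
exists (fun m => proj1_sig (constructive_indefinite_description _ (tot m))).
intros m. destruct (loc m) as [K HK].
destruct (proj2 GA (m :: K)) as [c Hc].
destruct (Hc m (or_introl eq_refl)) as [_ H2].
rewrite <- H2. apply HK. intros x Hx.
destruct (constructive_indefinite_description _ (tot x)) as [q Hq]; simpl.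
symmetry; apply (proj1 (Hc x (or_intror Hx))); auto.
Qed.
End Compact.

Theorem lemma10 (CS : cell_space) (Q : Type)
  (N : coset_space CS -> Prop)
  (delta : ({n : coset_space CS | N n} -> Q) -> Q) :
  right_amenable CS ->
  finite_set (@stab CS) ->
  finite_type Q -> inhabited Q ->
  finite_set N ->
  (forall (g0 : cs_G CS) n, stab g0 -> N n -> N (cact g0 n)) ->
  ~ (forall d : cs_M CS -> Q, exists c, global_transition N delta c = d) ->
  exists F : cs_M CS -> Prop,
    (exists m, F m) /\ finite_set F /\
    exists p : {m : cs_M CS | F m} -> Q,
      forall c : cs_M CS -> Q,
        ~ (forall m : {m : cs_M CS | F m},
             global_transition N delta c (proj1_sig m) = p m).
Proof.
intros _ _ [lq lqP] [q0] [lN lNP] _ Hns.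
apply NNPP; intro Hno.
apply Hns; intro d.
destruct (@compactness (cs_M CS) Q (global_transition N delta) d lq lqP) as [c Hc].
- intros m. exists (map (fun n => rsemi m n) lN). intros c c' H.
  unfold global_transition. f_equal. apply functional_extensionality. intros n.
  apply H. apply in_map. apply lNP. exact (proj2_sig n).
- intros L. destruct L as [|a L'].
  + exists (fun _ => q0); intros m [].
  + apply NNPP; intro Hc. apply Hno.
    exists (fun m => In m (a :: L')). split; [exists a; left; reflexivity|].
    split; [exists (a :: L'); auto|].
    exists (fun m => d (proj1_sig m)). intros c Hc'. apply Hc. exists c.
    intros m Hm. exact (Hc' (exist _ m Hm)).
- exists c. apply functional_extensionality; exact Hc.
Qed.
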